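(* Let $X$ be a nontrivial real Banach space. The following assertions are equivalent: (i) $X^*$ has the weak$^*$ local diameter $2$ property; (ii) $X$ is locally octahedral; (iii) for every $x\in S_X$, every $\alpha\in[-1,1]$, every $\varepsilon>0$, and every $\varepsilon_0\in(0,\varepsilon)$, there is a $y\in S_X$ such that, whenever $|\gamma|\leq 1+\varepsilon_0$, there is a $y^*\in X^*$ satisfying $y^*(x)=\alpha$, $y^*(y)=\gamma$, and $\|y^*\|\leq 1+\varepsilon$; (iii') for every $x\in S_X$, every $\alpha\in[-1,1]$, and every $\varepsilon>0$, there are $y\in S_X$ and $x_1^*,x_2^*\in X^*$ satisfying $x_1^*(x)=x_2^*(x)=\alpha$, $x_1^*(y)-x_2^*(y)>2-\varepsilon$, and $\|x_1^*\|,\|x_2^*\|\leq 1+\varepsilon$; (iii'') for every $x\in S_X$ and every $\varepsilon>0$, there are $y\in S_X$ and $x_1^*,x_2^*\in X^*$ satisfying $x_1^*(x)=x_2^*(x)=1$, $x_1^*(y)-x_2^*(y)>2-\varepsilon$, and $\|x_1^*\|,\|x_2^*\|\leq 1+\varepsilon$.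
   Context: $B_Z$, $S_Z$ denote the closed unit ball and unit sphere of a Banach space $Z$. A weak$^*$ slice of $B_{X^*}$ is a set of the form $\{x^*\in B_{X^*}: x^*(x)>1-\alpha\}$ with $x\in S_X$ and $\alpha>0$. $X^*$ has the weak$^*$ local diameter $2$ property if every weak$^*$ slice of $B_{X^*}$ has diameter $2$. $X$ is locally octahedral if for every $x\in X$ and every $\varepsilon>0$ there is a $y\in S_X$ such that $\|sx+y\|\geq(1-\varepsilon)(|s|\|x\|+\|y\|)$ for all $s\in\mathbb{R}$. *)

(* Defs.v *)
From HB Require Import structures.
From mathcomp Require Import all_boot all_order all_algebra.
From mathcomp Require Import all_classical all_reals topology normedtype.
Set Implicit Arguments. Unset Strict Implicit. Unset Printing Implicit Defensive.
Import Order.TTheory GRing.Theory Num.Theory.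
Import numFieldNormedType.Exports.
Local Open Scope classical_set_scope.
Local Open Scope ring_scope.

Section Dual.
Variables (R : realType) (X : normedModType R).

Definition is_dual (f : X -> R) : Prop :=
  (forall (a : R) (x y : X), f (a *: x + y) = a * f x + f y) /\ continuous f.

Definition dnorm (f : X -> R) : R :=
  sup [set `|f x| | x in [set x : X | `|x| <= 1]].

Definition wstar_slice (x : X) (alpha : R) : set (X -> R) :=
  [set f | is_dual f /\ dnorm f <= 1 /\ 1 - alpha < f x].

Definition dual_diam (A : set (X -> R)) : R :=
  sup [set r | exists f g, A f /\ A g /\ r = dnorm (fun z => f z - g z)].

Definition wstar_LD2P : Prop :=
  forall (x : X) (alpha : R), `|x| = 1 -> 0 < alpha ->
    dual_diam (wstar_slice x alpha) = 2.

Definition locally_octahedral : Prop :=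
  forall (x : X) (eps : R), 0 < eps ->
    exists y : X, `|y| = 1 /\
      forall s : R, (1 - eps) * (`|s| * `|x| + `|y|) <= `|s *: x + y|.

End Dual.

(* Main.v *)
Require Import Defs.
From HB Require Import structures.
From mathcomp Require Import all_boot all_order all_algebra.
From mathcomp Require Import all_classical all_reals topology normedtype.
Set Implicit Arguments. Unset Strict Implicit. Unset Printing Implicit Defensive.
Import Order.TTheory GRing.Theory Num.Theory.
Import numFieldNormedType.Exports.
Local Open Scope classical_set_scope.
Local Open Scope ring_scope.
From mathcomp Require Import ring lra.

Section Basic.
Variables (R : realType) (X : normedModType R).
Implicit Types (f g : X -> R) (x y z : X).

Definition islin f := forall (a : R) x y, f (a *: x + y) = a * f x + f y.

Lemma lin0 f : islin f -> f 0 = 0.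
Proof. by move=> L; have := L 1 0 0; rewrite scale1r addr0 mul1r => H; lra. Qed.

Lemma linZ f a x : islin f -> f (a *: x) = a * f x.
Proof. by move=> L; rewrite -[a *: x]addr0 L lin0 // addr0. Qed.

Lemma linD f x y : islin f -> f (x + y) = f x + f y.
Proof. by move=> L; have := L 1 x y; rewrite scale1r mul1r. Qed.

Lemma linN f x : islin f -> f (- x) = - f x.
Proof. by move=> L; rewrite -scaleN1r linZ // mulN1r. Qed.

Lemma linB f x y : islin f -> f (x - y) = f x - f y.
Proof. by move=> L; rewrite linD // linN. Qed.

Lemma cont_of_bound f M : islin f -> 0 <= M -> (forall x, `|f x| <= M * `|x|) ->
  continuous f.
Proof.
move=> L M0 B x; apply/cvgrPdist_lt => e e0.
apply/nbhs_normP; exists (e / (M + 1)) => /=; first by rewrite divr_gt0 // ltr_wpDl.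
move=> t /= Ht.
rewrite -linB //; apply: (le_lt_trans (B _)).
have M1 : 0 < M + 1 by rewrite ltr_wpDl.
rewrite ltr_pdivlMr // in Ht.
apply: (@le_lt_trans _ _ ((M + 1) * `|x - t|)).
  by rewrite ler_wpM2r // lerDl.
by rewrite mulrC.
Qed.

Lemma bound_of_cont f : is_dual f -> exists M, 0 < M /\ forall x, `|x| <= 1 -> `|f x| <= M.
Proof.
move=> [L C]; have := C 0; move/cvgrPdist_le => /(_ 1 ltr01).
move/nbhs_normP => [d /= d0 Hd].
exists (2 / d); split; first by rewrite divr_gt0.
move=> x x1.
have : `|f 0 - f ((d / 2) *: x)| <= 1.
  apply: Hd => /=; rewrite sub0r normrN normrZ.
  rewrite ger0_norm ?divr_ge0 ?ltW //.
  have : d / 2 * `|x| <= d / 2 * 1 by apply: ler_wpM2l => //; lra.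
  lra.

have d20 : 0 <= d / 2 by lra.
rewrite lin0 // linZ // sub0r normrN normrM (ger0_norm d20).
move=> H; rewrite ler_pdivlMr //; rewrite mulrC.
have -> : d * `|f x| = 2 * (d / 2 * `|f x|) by field.
  lra.
Qed.

Lemma dnorm_le f M : (forall x, `|x| <= 1 -> `|f x| <= M) -> dnorm f <= M.
Proof.
move=> B; apply: ge_sup.
  by exists `|f 0|; exists 0 => //=; rewrite normr0 ler01.
by move=> r [x /= x1 <-]; apply: B.
Qed.

Lemma dnorm_ge f x : is_dual f -> `|x| <= 1 -> `|f x| <= dnorm f.
Proof.
move=> D x1; have [M [M0 HM]] := bound_of_cont D.
have ub : has_ubound [set `|f x| | x in [set x : X | `|x| <= 1]].
  by exists M => r [z /= z1 <-]; apply: HM.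
by apply: (ub_le_sup ub); exists x.
Qed.

Lemma dnorm_ge0 f : is_dual f -> 0 <= dnorm f.
Proof.
move=> D; have H := @dnorm_ge f 0 D; rewrite normr0 ler01 in H.
exact: le_trans (normr_ge0 _) (H isT).
Qed.

Lemma dnorm_bound f x : is_dual f -> `|f x| <= dnorm f * `|x|.
Proof.
move=> D; have [->|x0] := eqVneq x 0.
  by rewrite lin0 ?normr0 ?mulr0 //; case: D.
have nx : 0 < `|x| by rewrite normr_gt0.
have u1 : `|(`|x|^-1 *: x)| <= 1.
  by rewrite normrZ normfV normr_id mulVf ?normr_eq0.
have := dnorm_ge D u1; rewrite linZ; last by case: D.
rewrite normrM normfV normr_id => H.
by rewrite mulrC -ler_pdivrMl // mulrC.
Qed.

Lemma dual_of_bound f M : islin f -> 0 <= M -> (forall x, `|f x| <= M * `|x|) ->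
  is_dual f /\ dnorm f <= M.
Proof.
move=> L M0 B; split; first by split => //; apply: cont_of_bound B.
apply: dnorm_le => x x1; apply: le_trans (B x) _.
by rewrite -[leRHS]mulr1 ler_wpM2l.
Qed.
End Basic.

Section HB.
Variables (R : realType) (X : normedModType R) (C : R).
Hypothesis C0 : 0 <= C.

Definition lgraph (G : set (X * R)) :=
  [/\ (forall (a : R) u r v s, G (u, r) -> G (v, s) -> G (a *: u + v, a * r + s)),
      (forall u r s, G (u, r) -> G (u, s) -> r = s) &
      (forall u r, G (u, r) -> r <= C * `|u|)].

Lemma lgraph_ext (G : set (X * R)) (z : X) : lgraph G -> G (0, 0) ->
  ~ (exists r, G (z, r)) -> exists G', lgraph G' /\ G `<` G'.
Proof.
move=> [Gcl Gfun Gdom] G00 nz.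
pose A := [set t | exists u r, G (u, r) /\ t = r - C * `|u - z|].
have key : forall u r v s, G (u, r) -> G (v, s) -> r - C * `|u - z| <= C * `|v + z| - s.
  move=> u r v s Gu Gv; have := Gdom _ _ (Gcl 1 _ _ _ _ Gu Gv).
  rewrite scale1r mul1r => H.
  have : `|u + v| <= `|u - z| + `|v + z|.
    by rewrite -[u + v](_ : (u - z) + (v + z) = u + v) ?ler_normD //; rewrite addrCA subrK addrC.
  move=> T; have : C * `|u + v| <= C * (`|u - z| + `|v + z|) by rewrite ler_wpM2l.
  lra.
have A0 : A !=set0 by exists (0 - C * `|0 - z|); exists 0, 0.
have Aub : ubound A (C * `|0 + z| - 0).
  by move=> t [u [r [Gu ->]]]; apply: key.
pose c := sup A.
have cge : forall u r, G (u, r) -> r - C * `|u - z| <= c.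
  move=> u r Gu; apply: (ub_le_sup); first by exists (C * `|0 + z| - 0).
  by exists u, r.
have cle : forall v s, G (v, s) -> c <= C * `|v + z| - s.
  move=> v s Gv; apply: ge_sup => // t [u [r [Gu ->]]]; exact: key.
pose G' := [set p | exists u r (t : R), G (u, r) /\ p = (u + t *: z, r + t * c)].
exists G'; split; last first.
  split.
    by move=> [u r] Gu; exists u, r, 0; rewrite scale0r mul0r !addr0.
  move=> sub; apply: nz; exists c.
  have : G' (z, c) by exists 0, 0, 1; rewrite scale1r mul1r !add0r.
  by move/sub.
split.
- move=> a u r v s [u1 [r1 [t1 [G1 [-> ->]]]]] [u2 [r2 [t2 [G2 [-> ->]]]]].
  exists (a *: u1 + u2), (a * r1 + r2), (a * t1 + t2); split; first exact: Gcl.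
  congr pair.
    by rewrite scalerDr scalerDl scalerA addrACA.
  ring.
- move=> p r s [u1 [r1 [t1 [G1 [E1 ->]]]]] [u2 [r2 [t2 [G2 [E2 ->]]]]].
  have ht : t1 = t2.
    apply: contra_notP nz => /eqP ht; rewrite -subr_eq0 in ht.
    exists ((t1 - t2)^-1 * (-1 * r1 + r2) + 0).
    have Gz := Gcl ((t1 - t2)^-1) _ _ _ _ (Gcl (-1) _ _ _ _ G1 G2) G00.
    suff -> : z = (t1 - t2)^-1 *: (-1 *: u1 + u2) + 0 by [].
    rewrite addr0 scaleN1r [- u1 + _]addrC.
    have : u2 - u1 = (t1 - t2) *: z.
      have e : u2 = u1 + t1 *: z - t2 *: z by rewrite -E1 E2 addrK.
      by rewrite e addrAC (addrAC u1) subrr add0r scalerBl.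
    by move=> ->; rewrite scalerA mulVf // scale1r.
  subst t2; rewrite E1 in E2; have /addIr Eu := E2.
  by subst u2; rewrite (Gfun _ _ _ G1 G2).
- move=> p r [u [r1 [t [Gu [-> ->]]]]].
  have [t0|tn0] := eqVneq t 0.
    by subst t; rewrite scale0r mul0r !addr0; apply: Gdom.
  have [tp|tn] := ltP 0 t.
    have Gv := Gcl (t^-1) _ _ _ _ Gu G00.
    rewrite !addr0 in Gv.
    have := cle _ _ Gv.
    have -> : t^-1 *: u + z = t^-1 *: (u + t *: z).
      by rewrite scalerDr scalerA mulVf // scale1r.
    rewrite normrZ normfV (gtr0_norm tp) => H.
    have : t * c <= t * (C * (t^-1 * `|u + t *: z|) - t^-1 * r1).
      by rewrite ler_wpM2l // ltW.
    have -> : t * (C * (t^-1 * `|u + t *: z|) - t^-1 * r1) = C * `|u + t *: z| - r1.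
      by field.
    lra.
  have tn' : 0 < - t by rewrite oppr_gt0 lt_neqAle tn0.
  have Gv := Gcl ((- t)^-1) _ _ _ _ Gu G00.
  rewrite !addr0 in Gv.
  have := cge _ _ Gv.
  have -> : (- t)^-1 *: u - z = (- t)^-1 *: (u + t *: z).
    by rewrite scalerDr scalerA invrN mulNr mulVf // scaleN1r.
  rewrite normrZ normfV (gtr0_norm tn') => H.
  have : (- t) * ((- t)^-1 * r1 - C * ((- t)^-1 * `|u + t *: z|)) <= (- t) * c.
    by rewrite ler_wpM2l // ltW.
  have -> : (- t) * ((- t)^-1 * r1 - C * ((- t)^-1 * `|u + t *: z|)) = r1 - C * `|u + t *: z|.
    field; lra.
  lra.
Qed.

Lemma hahn_banach (G0 : set (X * R)) : lgraph G0 -> G0 (0, 0) ->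
  exists f, is_dual f /\ dnorm f <= C /\ forall u r, G0 (u, r) -> f u = r.
Proof.
move=> LG0 G00.
pose P := fun H : set (X * R) => lgraph H /\ (H = set0 \/ G0 `<=` H).
have PG0 : P G0 by split => //; right.
have [M [[[Mcl Mfun Mdom] MG] Mmax]] : exists A, P A /\ forall B, A `<` B -> ~ P B.
  apply: Zorn_bigcup => F FP Ftot; split; first split.
  - move=> a u r v s [H1 F1 H1u] [H2 F2 H2v].
    have [S12|S21] := Ftot _ _ F1 F2.
      exists H2 => //; have [[cl _ _] _] := FP _ F2; exact: cl _ _ _ _ _ (S12 _ H1u) H2v.
    exists H1 => //; have [[cl _ _] _] := FP _ F1; exact: cl _ _ _ _ _ H1u (S21 _ H2v).
  - move=> u r s [H1 F1 H1u] [H2 F2 H2v].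
    have [S12|S21] := Ftot _ _ F1 F2.
      have [[_ fn _] _] := FP _ F2; exact: fn _ _ _ (S12 _ H1u) H2v.
    have [[_ fn _] _] := FP _ F1; exact: fn _ _ _ H1u (S21 _ H2v).
  - by move=> u r [H1 F1 H1u]; have [[_ _ dm] _] := FP _ F1; apply: dm.
  - have [[H [FH GH]]|nex] := pselect (exists H, F H /\ G0 `<=` H).
      by right => p Gp; exists H => //; apply: GH.
    left; apply/seteqP; split => // p [H FH Hp].
    have [_ [E|GH]] := FP _ FH.
      by rewrite E in Hp.
    by exfalso; apply: nex; exists H.
have M0 : G0 `<=` M.
  case: MG => // E; exfalso; apply: (Mmax G0) => //; rewrite E; split => //.
  by move=> /(_ (0, 0) G00).
have totM : forall z, exists r, M (z, r).
  move=> z; have [//|nz] := pselect (exists r, M (z, r)); exfalso.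
  have [G' [LG' [MG' nG'M]]] := lgraph_ext (z := z) (And3 Mcl Mfun Mdom) (M0 _ G00) nz.
  apply: (Mmax G') => //; split => //; right; exact: subset_trans MG'.
pose f := fun z => projT1 (cid (totM z)).
have Mf : forall z, M (z, f z) by move=> z; rewrite /f; case: cid.
have L : islin f.
  move=> a x y; apply: (Mfun _ _ _ (Mf _)); exact: Mcl.
have B : forall x, `|f x| <= C * `|x|.
  move=> x; rewrite ler_norml; apply/andP; split; last exact: Mdom.
  have := Mdom _ _ (Mf (- x)); rewrite linN // normrN; lra.
have [D Dn] := dual_of_bound L C0 B.
exists f; split => //; split => // u r Gu.
exact: (Mfun _ _ _ (Mf u) (M0 _ Gu)).
Qed.
End HB.

Lemma alg (R : realType) (eps s a b N : R) : 0 < eps -> 0 <= s -> s + a <= (1 + eps / 4) * N ->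
  2 - eps / 4 < a - b -> - (1 + eps / 4) <= b -> (1 - eps) * (s + 1) <= N.
Proof.
move=> e0 s0 h1 h2 h3.
set d := eps / 4 in h1 h2 h3.
have eE : eps = 4 * d by rewrite /d; field.
rewrite eE.
have d0 : 0 < d by lra.
have k : (1 + d) * ((1 - 4 * d) * (s + 1)) <= (1 + d) * N.
  have : 0 <= d * s by rewrite mulr_ge0 // ltW.
  have : 0 <= d * d * (s + 1) by rewrite mulr_ge0 ?mulr_ge0 // ?ltW //; lra.
  move=> p1 p2.
  have -> : (1 + d) * ((1 - 4 * d) * (s + 1)) = s + 1 - 3 * d * s - 3 * d - 4 * (d * d * (s + 1)) by ring.
  lra.
by rewrite ler_pM2l in k; lra.
Qed.

Section Main.
Variables (R : realType) (X : normedModType R).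
Implicit Types (f g : X -> R) (x y z : X).

Lemma dual_scale f k : is_dual f -> 0 < k ->
  is_dual (fun z => f z / k) /\ dnorm (fun z => f z / k) <= dnorm f / k.
Proof.
move=> D k0; have [L _] := D.
apply: dual_of_bound.
- by move=> a u v /=; rewrite L mulrDl mulrA.
- by rewrite divr_ge0 ?dnorm_ge0 // ltW.
- move=> u; rewrite normrM normfV (gtr0_norm k0) (mulrAC (dnorm f)).
  apply: ler_wpM2r; first by rewrite invr_ge0 ltW.
  exact: dnorm_bound.
Qed.

Lemma dual_sub f g : is_dual f -> is_dual g ->
  is_dual (fun z => f z - g z) /\ dnorm (fun z => f z - g z) <= dnorm f + dnorm g.
Proof.
move=> Df Dg; have [Lf _] := Df; have [Lg _] := Dg.
apply: dual_of_bound.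
- by move=> a u v /=; rewrite Lf Lg; ring.
- by rewrite addr_ge0 ?dnorm_ge0.
- move=> u; apply: le_trans (ler_normB _ _) _.
  by rewrite mulrDl lerD ?dnorm_bound.
Qed.

Lemma unit_exists : (exists x : X, x != 0) -> exists y : X, `|y| = 1.
Proof.
move=> [x x0]; exists (`|x|^-1 *: x).
by rewrite normrZ normfV normr_id mulVf // normr_eq0.
Qed.


Definition P3 := forall (x : X) (alpha eps eps0 : R), `|x| = 1 ->
      -1 <= alpha <= 1 -> 0 < eps -> 0 < eps0 < eps ->
      exists y : X, `|y| = 1 /\
        forall gamma : R, `|gamma| <= 1 + eps0 ->
          exists f : X -> R, is_dual f /\ f x = alpha /\ f y = gamma /\
            dnorm f <= 1 + eps.
Definition P3' := forall (x : X) (alpha eps : R), `|x| = 1 ->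
      -1 <= alpha <= 1 -> 0 < eps ->
      exists (y : X) (f1 f2 : X -> R), `|y| = 1 /\ is_dual f1 /\ is_dual f2 /\
        f1 x = alpha /\ f2 x = alpha /\ 2 - eps < f1 y - f2 y /\
        dnorm f1 <= 1 + eps /\ dnorm f2 <= 1 + eps.
Definition P3'' := forall (x : X) (eps : R), `|x| = 1 -> 0 < eps ->
      exists (y : X) (f1 f2 : X -> R), `|y| = 1 /\ is_dual f1 /\ is_dual f2 /\
        f1 x = 1 /\ f2 x = 1 /\ 2 - eps < f1 y - f2 y /\
        dnorm f1 <= 1 + eps /\ dnorm f2 <= 1 + eps.

Lemma impD : P3 -> P3'.
Proof.
move=> H x alpha eps x1 al e0.
have [|y [y1 Hy]] := H x alpha eps (eps / 2) x1 al e0; first by apply/andP; split; lra.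
have [|f1 [D1 [f1x [f1y n1]]]] := Hy 1; first by rewrite normr1; lra.
have [|f2 [D2 [f2x [f2y n2]]]] := Hy (-1); first by rewrite normrN normr1; lra.
exists y, f1, f2; do !split => //; rewrite f1y f2y; lra.
Qed.

Lemma impE : P3' -> P3''.
Proof.
move=> H x eps x1 e0; apply: H => //; apply/andP; split; lra.
Qed.


Lemma impC : locally_octahedral X -> P3.
Proof.
move=> LO x alpha eps eps0 x1 /andP[al1 al2] e0 /andP[e00 e0e].
pose d := 1 - (eps - eps0) / (1 + eps).
have dE : d * (1 + eps) = 1 + eps0 by rewrite /d; field; lra.
have d0 : 0 < d.
  rewrite /d subr_gt0 ltr_pdivrMr; lra.
have d1 : d < 1.
  rewrite /d ltrBlDr ltrDl divr_gt0 //; lra.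
have [|y [y1 Hy]] := LO x (1 - d); first by lra.
have K : forall s t, d * (`|s| + `|t|) <= `|s *: x + t *: y|.
  move=> s t; have [->|t0] := eqVneq t 0.
    by rewrite scale0r addr0 normr0 addr0 normrZ x1 mulr1; have := normr_ge0 s; nra.
  have -> : s *: x + t *: y = t *: ((s / t) *: x + y).
    by rewrite scalerDr scalerA mulrCA mulfV // mulr1.
  have := Hy (s / t); rewrite x1 y1 mulr1 (_ : 1 - (1 - d) = d); last by ring.
  move=> H; rewrite normrZ.
  have nt : 0 < `|t| by rewrite normr_gt0.
  have -> : d * (`|s| + `|t|) = `|t| * (d * (`|s / t| + 1)).
    rewrite normrM normfV; field; by rewrite normr_eq0.
  by rewrite ler_wpM2l // ltW.
exists y; split => // gamma ga.
pose G0 := [set p : X * R | exists s t : R, p = (s *: x + t *: y, s * alpha + t * gamma)].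
have C0 : 0 <= 1 + eps by lra.
have LG : lgraph (1 + eps) G0.
  split.
  - move=> a u r v s' [s1 [t1 [-> ->]]] [s2 [t2 [-> ->]]].
    exists (a * s1 + s2), (a * t1 + t2); congr pair; last by ring.
    by rewrite scalerDr !scalerA addrACA -!scalerDl.
  - move=> u r s' [s1 [t1 [-> ->]]] [s2 [t2 []]].
    move=> /eqP; rewrite -subr_eq0 opprD addrACA -!scalerBl => /eqP E0 ->.
    have := K (s1 - s2) (t1 - t2); rewrite E0 normr0.
    have := normr_ge0 (s1 - s2); have := normr_ge0 (t1 - t2) => n1 n2 H.
    have Hs : `|s1 - s2| = 0 by nra.
    have Ht : `|t1 - t2| = 0 by nra.
    move/eqP: Hs; rewrite normr_eq0 subr_eq0 => /eqP ->.
    by move/eqP: Ht; rewrite normr_eq0 subr_eq0 => /eqP ->.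
  - move=> u r [s1 [t1 [-> ->]]].
    have := K s1 t1; move=> Kst.
    have h1 : s1 * alpha <= `|s1|.
      apply: le_trans (ler_norm _) _; rewrite normrM -[leRHS]mulr1 ler_wpM2l //.
      by rewrite ler_norml; apply/andP; split.
    have h2 : t1 * gamma <= `|t1| * (1 + eps0).
      by apply: le_trans (ler_norm _) _; rewrite normrM ler_wpM2l.
    have : (1 + eps) * (d * (`|s1| + `|t1|)) <= (1 + eps) * `|s1 *: x + t1 *: y|.
      by rewrite ler_wpM2l.
    have -> : (1 + eps) * (d * (`|s1| + `|t1|)) = (1 + eps0) * (`|s1| + `|t1|).
      by rewrite mulrA [(1 + eps) * d]mulrC dE.
    have := mulr_ge0 (ltW e00) (normr_ge0 s1); nra.
have G00 : G0 (0, 0) by exists 0, 0; rewrite !scale0r !mul0r !addr0.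
have [f [D [Dn Hf]]] := hahn_banach C0 LG G00.
exists f; split => //; split; last split => //.
  have := Hf (1 *: x + 0 *: y) (1 * alpha + 0 * gamma) (ex_intro _ 1 (ex_intro _ 0 erefl)).
  by rewrite scale1r scale0r addr0 mul1r mul0r addr0.
have := Hf (0 *: x + 1 *: y) (0 * alpha + 1 * gamma) (ex_intro _ 0 (ex_intro _ 1 erefl)).
by rewrite scale1r scale0r add0r mul1r mul0r add0r.
Qed.


Lemma impB : (exists x : X, x != 0) -> P3'' -> locally_octahedral X.
Proof.
move=> nt H x eps e0.
have [->|x0] := eqVneq x 0.
  have [y y1] := unit_exists nt; exists y; split => // s.
  by rewrite normr0 mulr0 add0r scaler0 add0r y1 mulr1; lra.
have nx : `|x| != 0 by rewrite normr_eq0.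
pose u := `|x|^-1 *: x.
have u1 : `|u| = 1 by rewrite normrZ normfV normr_id mulVf.
have d0 : 0 < eps / 4 by lra.
have [y [f1 [f2 [y1 [D1 [D2 [f1u [f2u [dif [n1 n2]]]]]]]]]] := H u (eps / 4) u1 d0.
exists y; split => // s; rewrite y1.
have -> : s *: x = (s * `|x|) *: u by rewrite /u scalerA mulfK.
have -> : `|s| * `|x| = `|s * `|x| | by rewrite normrM normr_id.
move: (s * `|x|) => sg.
have [L1 _] := D1; have [L2 _] := D2.
have b1 : `|f1 y| <= 1 + eps / 4.
  by apply: le_trans (dnorm_bound _ D1) _; rewrite y1 mulr1.
have b2 : `|f2 y| <= 1 + eps / 4.
  by apply: le_trans (dnorm_bound _ D2) _; rewrite y1 mulr1.
have c1 : f1 (sg *: u + y) <= (1 + eps / 4) * `|sg *: u + y|.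
  apply: le_trans (ler_norm _) _; apply: le_trans (dnorm_bound _ D1) _.
  by rewrite ler_wpM2r.
have c2 : - f2 (sg *: u + y) <= (1 + eps / 4) * `|sg *: u + y|.
  have h1 := ler_norm (- f2 (sg *: u + y)); rewrite normrN in h1.
  apply: le_trans h1 _; apply: le_trans (dnorm_bound _ D2) _.
  by rewrite ler_wpM2r.
rewrite L1 f1u mulr1 in c1.
rewrite L2 f2u mulr1 in c2.
move: b1 b2; rewrite !ler_norml => /andP[b1 b1'] /andP[b2 b2'].
have [sp|sn] := leP 0 sg.
  rewrite ger0_norm //; apply: (alg (a := f1 y) (b := f2 y)) => //.
rewrite ltr0_norm //; apply: (alg (a := - f2 y) (b := - f1 y)) => //.
- lra.
- lra.
- lra.
- lra.
Qed.


Lemma impF : P3' -> wstar_LD2P X.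
Proof.
move=> H x alpha x1 a0; rewrite /dual_diam.
set S := [set r | _].
have ub : forall r, S r -> r <= 2.
  move=> r [f [g [[Df [nf _]] [[Dg [ng _]] ->]]]].
  have [_ h] := dual_sub Df Dg; lra.
have nearS : forall eta, 0 < eta -> exists2 r, S r & 2 - eta < r.
  move=> eta et.
  pose m := Num.min alpha eta.
  have /andP[ma me] : (m <= alpha) && (m <= eta) by rewrite -le_min.
  have m0 : 0 < m by rewrite lt_min a0.
  pose d := m / 3.
  have d0 : 0 < d by rewrite /d divr_gt0.
  have dm : 3 * d = m by rewrite /d; field.
  have [|y [f1 [f2 [y1 [D1 [D2 [f1x [f2x [dif [n1 n2]]]]]]]]]] := H x 1 d x1 _ d0.
    by apply/andP; split; lra.
  have d1 : 0 < 1 + d by lra.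
  have [G1 n1'] := dual_scale D1 d1.
  have [G2 n2'] := dual_scale D2 d1.
  have [G12 _] := dual_sub G1 G2.
  exists (dnorm (fun z => f1 z / (1 + d) - f2 z / (1 + d))).
    have sl : forall f, is_dual f -> dnorm f <= 1 + d -> f x = 1 ->
        wstar_slice x alpha (fun z => f z / (1 + d)).
      move=> f Df nf fx; split; first by case: (dual_scale Df d1).
      split.
        have [_ h] := dual_scale Df d1; apply: le_trans h _.
        by rewrite ler_pdivrMr // mul1r.
      rewrite fx ltr_pdivlMr //.
      have : 0 <= d * d by rewrite mulr_ge0 // ltW.
      nra.
    by exists (fun z => f1 z / (1 + d)), (fun z => f2 z / (1 + d)); split; [|split]; [apply: sl..|].
  have y1' : `|y| <= 1 by rewrite y1.
  apply: lt_le_trans (dnorm_ge G12 y1'); apply: lt_le_trans (ler_norm _).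
  rewrite -mulrBl ltr_pdivlMr //.
  have : 0 <= d * d by rewrite mulr_ge0 // ltW.
  nra.
have S0 : S !=set0 by have [r Sr _] := nearS 1 ltr01; exists r.
apply/eqP; rewrite eq_le; apply/andP; split; first exact: ge_sup.
rewrite leNgt; apply/negP => hs.
have [|r Sr hr] := nearS (2 - sup S); first by lra.
have hub : has_ubound S by exists 2.
have : r <= sup S by exact: (ub_le_sup hub Sr).
lra.
Qed.


Lemma impA : wstar_LD2P X -> P3''.
Proof.
move=> W x eps x1 e0.
pose d := eps / (2 + 2 * eps).
have d0 : 0 < d by rewrite /d divr_gt0 //; lra.
have dE : d * (2 + 2 * eps) = eps by rewrite /d; field; lra.
have d12 : d < 1 / 2.
  rewrite ltr_pdivrMr; last lra.
  by rewrite -dE; nra.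
have Hd := W x d x1 d0; rewrite /dual_diam in Hd.
set S := [set r | _] in Hd.
have [S0|S0] := pselect (S !=set0); last first.
  have : S = set0 by apply/seteqP; split => // r Sr; apply: S0; exists r.
  by move=> E; rewrite E sup0 in Hd; lra.
have [|r [f [g [[Df [nf fx]] [[Dg [ng gx]] ->]]]] hr] := sup_gt S0 (x := 2 - d).
  by rewrite Hd; lra.
have [Dh _] := dual_sub Df Dg.
have [Lf _] := Df; have [Lg _] := Dg.
pose T := [set `|f x0 - g x0| | x0 in [set x0 : X | `|x0| <= 1]].
have hrT : 2 - d < sup T := hr.
have T0 : T !=set0 by exists `|f 0 - g 0|; exists 0 => //=; rewrite normr0.
have [_ [z /= z1 <-] hz] := sup_gt T0 hrT.
have [w [w1 hw]] : exists w, `|w| <= 1 /\ 2 - d < f w - g w.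
  have [hp|hn] := leP 0 (f z - g z).
    by exists z; split => //; rewrite ger0_norm in hz.
  exists (- z); split; first by rewrite normrN.
  rewrite ltr0_norm // in hz; rewrite (@linN _ _ f z Lf) (@linN _ _ g z Lg); lra.
have w0 : w != 0.
  by apply/eqP => w0; rewrite w0 (lin0 Lf) (lin0 Lg) subrr in hw; lra.
have nw : 0 < `|w| by rewrite normr_gt0.
pose y := `|w|^-1 *: w.
have y1 : `|y| = 1 by rewrite normrZ normfV normr_id mulVf // gt_eqF.
have hy : 2 - d < f y - g y.
  rewrite /y (linZ _ _ Lf) (linZ _ _ Lg) -mulrBr.
  have hp : f w - g w > 0 by lra.
  apply: (lt_le_trans hw); rewrite mulrC ler_pdivlMr //.
  nra.
have fy : `|f y| <= 1 by apply: le_trans (dnorm_bound _ Df) _; rewrite y1 mulr1.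
have gy : `|g y| <= 1 by apply: le_trans (dnorm_bound _ Dg) _; rewrite y1 mulr1.
have fx1 : f x <= 1.
  by apply: le_trans (ler_norm _) _; apply: le_trans (dnorm_bound _ Df) _; rewrite x1 mulr1.
have gx1 : g x <= 1.
  by apply: le_trans (ler_norm _) _; apply: le_trans (dnorm_bound _ Dg) _; rewrite x1 mulr1.
move: fy gy; rewrite !ler_norml => /andP[fy1 fy2] /andP[gy1 gy2].
have fx0 : 0 < f x by lra.
have gx0 : 0 < g x by lra.
have [F1 nF1] := dual_scale Df fx0.
have [F2 nF2] := dual_scale Dg gx0.
have key : forall h : X -> R, is_dual h -> dnorm h <= 1 -> 1 - d < h x ->
    dnorm h / h x <= 1 + eps.
  move=> h Dh' nh hx; have hx0 : 0 < h x by lra.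
  rewrite ler_pdivrMr //; apply: le_trans nh _.
  have : (1 + eps) * (1 - d) = 1 + eps / 2.
    by rewrite /d; field; lra.
  nra.
exists y, (fun z => f z / f x), (fun z => g z / g x); do !split => //.
- by rewrite /= mulfV // gt_eqF.
- by rewrite /= mulfV // gt_eqF.
- have h1 : f y <= f y / f x by rewrite ler_pdivlMr //; nra.
  have h2 : g y / g x <= g y by rewrite ler_pdivrMr //; nra.
  have : d <= eps.
    rewrite -dE; nra.
  rewrite /=; lra.
- exact: le_trans nF1 (key _ Df nf fx).
- exact: le_trans nF2 (key _ Dg ng gx).
Qed.

End Main.

Unset Implicit Arguments.

Theorem theorem3p1 (R : realType) (X : completeNormedModType R)
  (nontriv : exists x : X, x != 0) :
  let iii := forall (x : X) (alpha eps eps0 : R), `|x| = 1 ->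
      -1 <= alpha <= 1 -> 0 < eps -> 0 < eps0 < eps ->
      exists y : X, `|y| = 1 /\
        forall gamma : R, `|gamma| <= 1 + eps0 ->
          exists f : X -> R, is_dual f /\ f x = alpha /\ f y = gamma /\
            dnorm f <= 1 + eps in
  let iii' := forall (x : X) (alpha eps : R), `|x| = 1 ->
      -1 <= alpha <= 1 -> 0 < eps ->
      exists (y : X) (f1 f2 : X -> R), `|y| = 1 /\ is_dual f1 /\ is_dual f2 /\
        f1 x = alpha /\ f2 x = alpha /\ 2 - eps < f1 y - f2 y /\
        dnorm f1 <= 1 + eps /\ dnorm f2 <= 1 + eps in
  let iii'' := forall (x : X) (eps : R), `|x| = 1 -> 0 < eps ->
      exists (y : X) (f1 f2 : X -> R), `|y| = 1 /\ is_dual f1 /\ is_dual f2 /\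
        f1 x = 1 /\ f2 x = 1 /\ 2 - eps < f1 y - f2 y /\
        dnorm f1 <= 1 + eps /\ dnorm f2 <= 1 + eps in
  (wstar_LD2P X <-> locally_octahedral X) /\
  (locally_octahedral X <-> iii) /\
  (iii <-> iii') /\
  (iii' <-> iii'').
Proof.
move=> iii iii' iii''.
have A : wstar_LD2P X -> P3'' X := @impA R X.
have B : P3'' X -> locally_octahedral X := @impB R X nontriv.
have C : locally_octahedral X -> P3 X := @impC R X.
have D : P3 X -> P3' X := @impD R X.
have E : P3' X -> P3'' X := @impE R X.
have F : P3' X -> wstar_LD2P X := @impF R X.
rewrite /iii /iii' /iii''.
split; [|split; [|split]]; split => H.
- exact: B (A H).
- exact: F (D (C H)).
- exact: C H.
- exact: B (E (D H)).
- exact: D H.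
- exact: C (B (E H)).
- exact: E H.
- exact: D (C (B H)).
Qed.
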